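(* No minimally non-perfectly divisible graph contains a simplicial vertex.
   Context: All graphs are finite and simple. A vertex is simplicial if its neighbourhood is a clique. For $S\subseteq V(G)$, $G[S]$ is the subgraph induced by $S$. $\omega(G)$ is the number of vertices in a largest clique of $G$ and $\chi(G)$ the chromatic number. A graph $G$ is perfect if $\chi(H)=\omega(H)$ for every induced subgraph $H$ of $G$. A partition $(A,B)$ of $V(G)$ is good if $G[A]$ is perfect and $\omega(G[B])<\omega(G)$. A graph $G$ is perfectly divisible if every induced subgraph $H$ of $G$ with at least one edge admits a good partition (of $V(H)$). A graph is minimally non-perfectly divisible if it is not perfectly divisible but each of its proper induced subgraphs is perfectly divisible. *)

(* Defs.v *)
(* A finite simple graph is a symmetric irreflexive boolean
   relation [e] on a finite vertex type [T]; induced subgraphs G[S] are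
   represented by vertex subsets [S : {set T}]. *)
From mathcomp Require Import all_boot.
Set Implicit Arguments. Unset Strict Implicit. Unset Printing Implicit Defensive.

Section Graphs.
Variables (T : finType) (e : rel T).

Definition simple_graph : Prop := symmetric e /\ irreflexive e.

Definition is_clique (A : {set T}) : bool :=
  [forall x in A, forall y in A, (x != y) ==> e x y].

Definition omega (S : {set T}) : nat :=
  \max_(A : {set T} | (A \subset S) && is_clique A) #|A|.

Definition colorable (S : {set T}) (k : nat) : bool :=
  [exists f : {ffun T -> 'I_(#|T|.+1)},
     [forall x in S, f x < k] &&
     [forall x in S, forall y in S, (x != y) && e x y ==> (f x != f y)]].

Lemma colorable_ex (S : {set T}) : exists k, colorable S k.
Proof.
exists #|T|.+1; apply/existsP.
have H : forall x : T, enum_rank x < #|T|.+1 by move=> x; apply: ltnW; apply: ltn_ord.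
exists [ffun x => Ordinal (H x)]; apply/andP; split.
  by apply/forallP => x; apply/implyP => _; rewrite ffunE /=.
apply/forallP => x; apply/implyP => _; apply/forallP => y; apply/implyP => _.
apply/implyP => /andP [nxy _]; rewrite !ffunE; apply: contra nxy => /eqP [].
by move/val_inj/enum_rank_inj => ->.
Qed.

Definition chi (S : {set T}) : nat := ex_minn (colorable_ex S).

Definition perfect (S : {set T}) : Prop :=
  forall H : {set T}, H \subset S -> chi H = omega H.

Definition good_partition (S A : {set T}) : Prop :=
  A \subset S /\ perfect A /\ omega (S :\: A) < omega S.

Definition has_edge (S : {set T}) : Prop :=
  exists x y, [/\ x \in S, y \in S & e x y].

Definition perfectly_divisible (S : {set T}) : Prop :=
  forall H : {set T}, H \subset S -> has_edge H ->
    exists A : {set T}, good_partition H A.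

Definition minimally_non_pd : Prop :=
  ~ perfectly_divisible [set: T] /\
  forall S : {set T}, S \proper [set: T] -> perfectly_divisible S.

Definition simplicial (v : T) : bool := is_clique [set u | e v u].
End Graphs.

(* Main.v *)
Require Import Defs.
From mathcomp Require Import all_boot.
From Stdlib Require Import Classical_Prop.
Set Implicit Arguments. Unset Strict Implicit. Unset Printing Implicit Defensive.

Lemma colP (T : finType) (e : rel T) (S : {set T}) k :
  reflect (exists f : {ffun T -> 'I_(#|T|.+1)},
     (forall x, x \in S -> f x < k) /\
     (forall x y, x \in S -> y \in S -> x != y -> e x y -> f x != f y))
  (colorable e S k).
Proof.
apply: (iffP existsP) => [[f /andP[/forallP H1 /forallP H2]]|[f [H1 H2]]].
  exists f; split=> [x xS|x y xS yS nxy exy].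
    by have := H1 x; rewrite xS.
  have := H2 x; rewrite xS => /forallP/(_ y); rewrite yS /= nxy exy; exact.
exists f; apply/andP; split; apply/forallP=> x; apply/implyP=> xS.
  exact: H1.
apply/forallP=> y; apply/implyP=> yS; apply/implyP=> /andP[nxy exy].
exact: H2.
Qed.

Lemma chi_col (T : finType) (e : rel T) (S : {set T}) : colorable e S (chi e S).
Proof. by rewrite /chi; case: ex_minnP. Qed.

Lemma chi_min (T : finType) (e : rel T) (S : {set T}) k : colorable e S k -> chi e S <= k.
Proof. by rewrite /chi; case: ex_minnP => m _ H /H. Qed.

Lemma cliqueP (T : finType) (e : rel T) (A : {set T}) :
  reflect (forall x y, x \in A -> y \in A -> x != y -> e x y) (is_clique e A).
Proof.
apply: (iffP forallP) => [H x y xA yA nxy|H x].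
  have := H x; rewrite xA => /forallP/(_ y); rewrite yA nxy; exact.
apply/implyP=> xA; apply/forallP=> y; apply/implyP=> yA; apply/implyP; exact: H.
Qed.

Lemma omega_ub (T : finType) (e : rel T) (S : {set T}) k :
  (forall A : {set T}, A \subset S -> is_clique e A -> #|A| <= k) -> omega e S <= k.
Proof.
move=> H; apply/bigmax_leqP => A /andP[]; exact: H.
Qed.

Lemma omega_lb (T : finType) (e : rel T) (S A : {set T}) :
  A \subset S -> is_clique e A -> #|A| <= omega e S.
Proof.
move=> sAS cA; rewrite /omega.
by apply: (leq_bigmax_cond (F := fun A : {set T} => #|A|)); rewrite sAS.
Qed.

Lemma omega_mono (T : finType) (e : rel T) (S S' : {set T}) :
  S \subset S' -> omega e S <= omega e S'.
Proof.
move=> sS; apply: omega_ub => A sA cA; apply: omega_lb => //.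
exact: subset_trans sS.
Qed.

Lemma omega_card (T : finType) (e : rel T) (S : {set T}) : omega e S <= #|S|.
Proof. apply: omega_ub => A sA _; exact: subset_leq_card. Qed.

Lemma omega_le_chi (T : finType) (e : rel T) (S : {set T}) : omega e S <= chi e S.
Proof.
apply: omega_ub => A sAS /cliqueP cA.
have /colP [f [H1 H2]] := chi_col e S.
have -> : #|A| = size (map (fun x => val (f x)) (enum A)) by rewrite size_map cardE.
rewrite -(size_iota 0 (chi e S)); apply: uniq_leq_size.
  rewrite map_inj_in_uniq ?enum_uniq // => x y; rewrite !mem_enum => xA yA.
  move=> fxy; apply/eqP; apply: contraT => nxy.
  have xS := subsetP sAS x xA; have yS := subsetP sAS y yA.
  by have := H2 x y xS yS nxy (cA x y xA yA nxy); rewrite -val_eqE fxy eqxx.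
move=> i /mapP [x]; rewrite mem_enum => xA ->.
by rewrite mem_iota add0n /= H1 // (subsetP sAS).
Qed.

Lemma perfect_add (T : finType) (e : rel T) v (A : {set T}) :
  simple_graph e -> simplicial e v -> perfect e A -> perfect e (v |: A).
Proof.
move=> [esym eirr] /cliqueP sv pA H sub.
case vH: (v \in H); last first.
  apply: pA; apply/subsetP => x xH; have := subsetP sub x xH.
  rewrite in_setU1 => /orP[/eqP xv|//]; by subst; rewrite xH in vH.
set H' := H :\ v.
have sH'A : H' \subset A.
  apply/subsetP => x; rewrite in_setD1 => /andP[xv xH].
  by have := subsetP sub x xH; rewrite in_setU1 (negbTE xv).
have eH' := pA H' sH'A.
apply/eqP; rewrite eqn_leq omega_le_chi andbT; apply: chi_min.
have /colP [f [H1 H2]] := chi_col e H'.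
set N := [set u in H' | e v u].
set l := map (fun x => val (f x)) (enum N).
set m := omega e H.
have vN : v \notin N by rewrite inE eirr andbF.
have Nm : #|N|.+1 <= m.
  have <- : #|v |: N| = #|N|.+1 by rewrite cardsU1 vN.
  apply: omega_lb.
    apply/subsetP => x; rewrite in_setU1 => /orP[/eqP->//|].
    by rewrite inE in_setD1 => /andP[/andP[_ ->]].
  apply/cliqueP => x y; rewrite !in_setU1 => /orP[/eqP->|xN] /orP[/eqP->|yN].
  - by rewrite eqxx.
  - by move: yN; rewrite inE => /andP[].
  - by move: xN; rewrite inE => /andP[_ exv] _; rewrite esym.
  - move: xN yN; rewrite !inE => /andP[_ ex] /andP[_ ey].
    apply: sv; rewrite inE //.
have : ~~ all (fun i => i \in l) (iota 0 m).
  apply/negP => /allP Hs.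
  have := uniq_leq_size (iota_uniq 0 m) Hs.
  by rewrite size_iota size_map -cardE leqNgt Nm.
case/allPn => c; rewrite mem_iota add0n /= => cm cl.
have hc : c < #|T|.+1.
  apply: (leq_trans cm); apply: (leq_trans (omega_card e H)).
  by apply: leqW; apply: max_card.
have fm : forall x, x \in H' -> f x < m.
  move=> x xH'; apply: (leq_trans (H1 x xH')); rewrite eH'.
  by apply: omega_mono; apply: subsetDl.
apply/colP; exists [ffun x => if x == v then Ordinal hc else f x]; split.
  move=> x xH; rewrite ffunE; case: eqP => xv //.
  by apply: fm; rewrite in_setD1 xH andbT; apply/eqP.
have Hl : forall y, y \in H -> y != v -> e v y -> val (f y) \in l.
  move=> y yH yv evy; apply/mapP; exists y => //.
  by rewrite mem_enum inE in_setD1 yv yH evy.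
move=> x y xH yH nxy exy; rewrite !ffunE.
case: (eqVneq x v) => [xv|xv]; case: (eqVneq y v) => [yv|yv].
- by rewrite xv yv eqxx in nxy.
- subst x; apply/eqP => /(congr1 val) /= ce.
  by move: cl; rewrite ce (Hl y yH yv exy).
- subst y; apply/eqP => /(congr1 val) /= ce.
  by move: cl; rewrite -ce (Hl x xH xv) // esym.
- by apply: H2 => //; rewrite in_setD1 ?xv ?yv.
Qed.

Lemma perfect0 (T : finType) (e : rel T) : perfect e set0.
Proof.
move=> H; rewrite subset0 => /eqP ->.
apply/eqP; rewrite eqn_leq omega_le_chi andbT.
have: chi e set0 <= 0.
  apply: chi_min; apply/colP.
  have [f _] := colP _ _ _ (chi_col e (@set0 T)) ; exists f; split => x; by rewrite inE.
by rewrite leqn0 => /eqP ->.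
Qed.

Theorem lemma3 (T : finType) (e : rel T) :
  simple_graph e -> minimally_non_pd e -> forall v : T, ~~ simplicial e v.
Proof.
move=> sg [npd mpd] v; apply/negP => sv; apply: npd => H _ hH.
case pH: (H \proper [set: T]).
  by apply: (mpd H pH H (subxx H) hH).
have HT : H = [set: T].
  by apply/eqP; rewrite eqEproper subsetT /= pH.
subst H.
have [esym eirr] := sg.
have w2 : 2 <= omega e [set: T].
  case: hH => x [y [_ _ exy]].
  have nxy : x != y by apply: contraTneq exy => ->; rewrite eirr.
  have <- : #|[set x; y]| = 2 by rewrite cards2 nxy.
  apply: omega_lb; first exact: subsetT.
  apply/cliqueP => a b; rewrite !inE => /orP[]/eqP-> /orP[]/eqP->;
    rewrite ?eqxx //= => _; by rewrite // esym.
set S := [set: T] :\ v.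
have pS : S \proper [set: T].
  by rewrite properT; apply/eqP => /setP/(_ v); rewrite !inE eqxx.
have [A [sAS pA lt]] : exists A : {set T}, [/\ A \subset S, perfect e A &
    omega e (S :\: A) < omega e [set: T]].
  case: (Classical_Prop.classic (has_edge e S)) => hS.
    have [A [sA [pA ltA]]] := mpd S pS S (subxx S) hS.
    exists A; split => //; apply: (leq_trans ltA); exact: omega_mono (subsetT _).
  exists set0; split => //; first exact: sub0set; first exact: perfect0.
  rewrite setD0; apply: leq_trans w2; rewrite ltnS.
  apply: omega_ub => B sB /cliqueP cB; apply/card_le1_eqP => x y xB yB.
  apply/eqP; apply: contraT => nxy; case: hS; exists x, y; split;
    by [apply: (subsetP sB) | apply: cB; rewrite // eq_sym].
exists (v |: A); split; first exact: subsetT.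
split; first exact: perfect_add.
have -> : [set: T] :\: (v |: A) = S :\: A.
  by apply/setP => x; rewrite !inE; case: (x == v); rewrite /= ?andbT ?andbF.

exact: lt.
Qed.
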